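(* For $\delta, \rho \in (0,1/4)$, there exist $\nu, \nu' > 0$ depending only on $\delta,\rho$, and a finite set $\mathcal{K}$ of positive real numbers depending only on $\delta,\rho$, such that for every $n\ge 1$ and every $x \in \mathbb{S}^{n-1} \setminus \operatorname{Cons}(\delta,\rho)$, at least one of the following holds: (1) there exist $\kappa,\kappa' \in \mathcal{K}$ such that $|x_i| \le \kappa/\sqrt{n}$ for at least $\nu n$ indices $i \in [n]$, and $(\kappa+\nu')/\sqrt{n} < |x_i| \le \kappa'/\sqrt{n}$ for at least $\nu n$ indices $i\in[n]$; (2) there exist $\kappa,\kappa' \in \mathcal{K}$ such that $\kappa/\sqrt{n} < x_i < \kappa'/\sqrt{n}$ for at least $\nu n$ indices $i \in [n]$, and $-\kappa'/\sqrt{n} < x_i < -\kappa/\sqrt{n}$ for at least $\nu n$ indices $i\in[n]$.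
   Context: $\mathbb{S}^{n-1}$ is the Euclidean unit sphere in $\mathbb{R}^n$ and $[n]=\{1,\dots,n\}$. For $\delta,\rho\in(0,1)$, $\operatorname{Cons}(\delta,\rho)$ is the set of $x \in \mathbb{S}^{n-1}$ for which there exists $\lambda \in \mathbb{R}$ with $|x_i - \lambda| \le \rho/\sqrt{n}$ for at least $(1-\delta)n$ indices $i\in[n]$. *)

(* Defs.v *)
From mathcomp Require Import all_boot all_order all_algebra.
From mathcomp Require Import reals.
Set Implicit Arguments. Unset Strict Implicit. Unset Printing Implicit Defensive.
Import Order.TTheory GRing.Theory Num.Theory.
Local Open Scope ring_scope.

Definition on_sphere {R : realType} {n : nat} (x : 'I_n -> R) : Prop :=
  \sum_(i < n) x i ^+ 2 = 1.

Definition cnt {R : realType} {n : nat} (P : pred 'I_n) : R :=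
  (#|[set i | P i]|)%:R.

Definition Cons_set {R : realType} (delta rho : R) {n : nat} (x : 'I_n -> R) : Prop :=
  on_sphere x /\
  exists lambda : R,
    (1 - delta) * n%:R <= cnt (fun i => `|x i - lambda| <= rho / Num.sqrt n%:R).

(* Main.v *)
Require Import Defs.
From mathcomp Require Import all_boot all_order all_algebra.
From mathcomp Require Import reals ring lra.
Import Order.TTheory GRing.Theory Num.Theory.
Local Open Scope ring_scope.


Lemma cnt_le {R : realType} {n : nat} (P Q : pred 'I_n) : (forall i, P i -> Q i) -> cnt P <= cnt Q :> R.
Proof.
move=> H; rewrite /cnt ler_nat; apply: subset_leq_card; apply/subsetP => i.
by rewrite !inE; apply: H.
Qed.

Lemma cnt_le2 {R : realType} {n : nat} (P Q S : pred 'I_n) : (forall i, P i -> Q i || S i) ->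
  cnt P <= cnt Q + cnt S :> R.
Proof.
move=> H; rewrite /cnt -natrD ler_nat.
apply: (leq_trans _ (leq_card_setU _ _)).
apply: subset_leq_card; apply/subsetP => i; rewrite !inE; apply: H.
Qed.

Lemma cnt_compl {R : realType} {n : nat} (P : pred 'I_n) : cnt P + cnt (predC P) = n%:R :> R.
Proof.
rewrite /cnt -natrD; congr (_%:R).
have -> : [set i | predC P i] = ~: [set i | P i] by apply/setP=> i; rewrite !inE.
by rewrite cardsC card_ord.
Qed.

Lemma cnt_ge0 {R : realType} {n : nat} (P : pred 'I_n) : 0 <= cnt P :> R.
Proof. by rewrite /cnt ler0n. Qed.

Lemma cheb {R : realType} {n : nat} (x : 'I_n -> R) t : 0 <= t ->
  cnt (fun i => t < `|x i|) * t ^+ 2 <= \sum_(i < n) x i ^+ 2.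
Proof.
move=> t0; rewrite /cnt mulr_natl -sumr_const big_mkcond /=.
apply: ler_sum => i _; rewrite inE.
case: ifP => h; last by rewrite sqr_ge0.
have ht : t <= `|x i| by exact: ltW.
by rewrite -[x i ^+ 2]real_normK ?num_real // !expr2 ler_pM.
Qed.

Theorem lemma2p3 (R : realType) (delta rho : R) :
  0 < delta < 1/4 -> 0 < rho < 1/4 ->
  exists (nu nu' : R) (K : seq R),
    [/\ 0 < nu, 0 < nu', (forall k, k \in K -> 0 < k) &
    forall (n : nat) (x : 'I_n -> R),
      (1 <= n)%N -> on_sphere x -> ~ Cons_set delta rho x ->
      (exists2 kappa, kappa \in K & exists2 kappa', kappa' \in K &
         nu * n%:R <= cnt (fun i => `|x i| <= kappa / Num.sqrt n%:R) /\
         nu * n%:R <= cnt (fun i => ((kappa + nu') / Num.sqrt n%:R < `|x i|)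
                                    && (`|x i| <= kappa' / Num.sqrt n%:R)))
      \/
      (exists2 kappa, kappa \in K & exists2 kappa', kappa' \in K &
         nu * n%:R <= cnt (fun i => (kappa / Num.sqrt n%:R < x i)
                                    && (x i < kappa' / Num.sqrt n%:R)) /\
         nu * n%:R <= cnt (fun i => (- (kappa' / Num.sqrt n%:R) < x i)
                                    && (x i < - (kappa / Num.sqrt n%:R))))].
Proof.
move=> /andP[d0 d1] /andP[r0 r1].
set h := rho / 2; set M := 2 / delta; set N := (Num.truncn (M / h)).+1.
have h0 : 0 < h by rewrite /h divr_gt0.
have M0 : 0 < M by rewrite /M divr_gt0.
have NM : M < N%:R * h.
  by rewrite -ltr_pdivrMr // /N truncnS_gt.
set K := [seq j%:R * h | j <- iota 1 N.+2].
have Kin : forall j, (1 <= j <= N.+2)%N -> j%:R * h \in K.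
  move=> j /andP[j1 j2]; rewrite /K; apply: (map_f (fun j : nat => j%:R * h)); rewrite mem_iota j1 /=.
  by rewrite add1n ltnS.
exists (delta / 4), h, K; split => //.
- by rewrite divr_gt0.
- move=> k /mapP[j]; rewrite mem_iota => /andP[j1 _] ->.
  by rewrite mulr_gt0 // ltr0n.
move=> n x n1 sph nC.
set s : R := Num.sqrt n%:R.
have s0 : 0 < s by rewrite sqrtr_gt0 ltr0n.
set nn : R := n%:R.
have nn0 : 0 <= nn by rewrite ler0n.
have nCons : forall lam, cnt (fun i => `|x i - lam| <= rho / s) < (1 - delta) * nn.
  move=> lam; rewrite ltNge; apply/negP => H; apply: nC; split => //; by exists lam.
pose F := fun j : nat => (cnt (fun i => `|x i| <= j%:R * h / s) : R).
have chb : cnt (fun i => M / s < `|x i|) <= delta / 4 * nn.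
  have t0 : 0 <= M / s by rewrite divr_ge0 // ltW.
  have := @cheb R n x (M / s) t0; rewrite sph.
  set c := cnt _ => H.
  have H2 : c * M ^+ 2 <= nn.
    have -> : nn = s ^+ 2 by rewrite sqr_sqrtr // ler0n.
    have e : c * M ^+ 2 = (c * (M / s) ^+ 2) * s ^+ 2.
      by rewrite -mulrA -exprMn divfK // gt_eqF.
    by rewrite e ler_piMl // sqr_ge0.
  have c0 : 0 <= c by apply: cnt_ge0.
  have eM : M * delta = 2 by rewrite /M divfK // gt_eqF.
  have e4 : c * 4 = (c * M ^+ 2) * (delta * delta).
    rewrite -mulrA -(expr2 delta) -exprMn eM; congr (_ * _); by rewrite expr2 -natrM.
  have : c * 4 <= nn * (delta * delta).
    by rewrite e4 ler_wpM2r // mulr_ge0 // ltW.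
  have : nn * (delta * delta) <= nn * delta.
    by rewrite ler_wpM2l // ler_piMr // ?(ltW d0) // ltW // (lt_trans d1) //; lra.
  lra.
have FN : (1 - delta / 4) * nn <= F N.
  have := cnt_compl (R:=R) (fun i => M / s < `|x i|).
  have : cnt (predC (fun i => M / s < `|x i|)) <= F N.
    apply: cnt_le => i /=; rewrite -leNgt => hi; apply: (le_trans hi).
    by rewrite ler_pM2r ?invr_gt0 // ltW.
  rewrite /nn; lra.
have ex : exists j, (0 < j)%N && (delta / 4 * nn <= F j).
  exists N; apply/andP; split => //.
  apply: le_trans FN; rewrite ler_wpM2r //; lra.
case: (ex_minnP ex) => j /andP[j0 Fj] jmin.
have jN : (j <= N)%N.
  apply: jmin; apply/andP; split => //; apply: le_trans FN; rewrite ler_wpM2r //; lra.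
have dn0 : 0 <= delta * nn by rewrite mulr_ge0 // ltW.
case: (boolP (delta / 4 * nn <= cnt (fun i => (j.+1%:R * h / s < `|x i|) && (`|x i| <= N%:R * h / s)))) => G.
  left; exists (j%:R * h); first by apply: Kin; rewrite j0 /=; apply: (leq_trans jN); rewrite -addn2 leq_addr.
  exists (N%:R * h); first by apply: Kin; rewrite /= -addn2 leq_addr.
  split; first exact: Fj.
  have -> : j%:R * h + h = j.+1%:R * h by rewrite -natr1 mulrDl mul1r.
  exact: G.
rewrite -ltNge in G.
have Fj1 : (1 - delta / 2) * nn < F j.+1.
  have := @cnt_le2 R n (fun i => `|x i| <= N%:R * h / s) (fun i => `|x i| <= j.+1%:R * h / s)
     (fun i => (j.+1%:R * h / s < `|x i|) && (`|x i| <= N%:R * h / s)).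
  have H : forall i, `|x i| <= N%:R * h / s -> (`|x i| <= j.+1%:R * h / s) || ((j.+1%:R * h / s < `|x i|) && (`|x i| <= N%:R * h / s)).
    by move=> i hi; case: lerP => //= _.
  move=> /(_ H) H2.
  move: FN G H2; rewrite /F; lra.
case: j j0 Fj jmin jN G Fj1 => [//|[|j]] j0 Fj jmin jN G Fj1.
  have := nCons 0.
  have : F 2 <= cnt (fun i => `|x i - 0| <= rho / s).
    apply: cnt_le => i; rewrite subr0 /h; suff -> : 2%:R * (rho / 2) = rho by [].
    by rewrite mulrC divfK // pnatr_eq0.
  move: Fj1; lra.
set t := h / s; set b := j%:R * t.
have t0 : 0 < t by rewrite /t divr_gt0.
have b0 : 0 <= b by rewrite /b mulr_ge0 ?ler0n // ltW.
have E : forall k, (j + k)%:R * h / s = b + k%:R * t.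
  by move=> k; rewrite /b /t natrD !mulrDl !mulrA.
have e1 : j.+1%:R * h / s = b + t by have := E 1; rewrite mul1r addn1.
have e3 : j.+3%:R * h / s = b + 3%:R * t by have := E 3; rewrite addnC.
have e4 : j.+4%:R * h / s = b + 4%:R * t by have := E 4; rewrite addnC.
have er : rho / s = 2%:R * t.
  rewrite /t /h mulrA; congr (_ * _); by rewrite mulrC divfK // pnatr_eq0.
have Fj0 : F j.+1 < delta / 4 * nn.
  rewrite ltNge; apply/negP => H.
  by have := jmin j.+1 H; rewrite ltnn.
set Wp := fun i => (b + t < x i) && (x i < b + 4%:R * t).
set Wm := fun i => (- (b + 4%:R * t) < x i) && (x i < - (b + t)).
have H1 : F j.+3 <= F j.+1 + cnt (fun i => Wp i || Wm i).
  apply: cnt_le2 => i; rewrite e1 e3 => hi.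
  case: (lerP `|x i| (b + t)) => //= hlt.
  case: (lerP 0 (x i)) => hx.
    rewrite ger0_norm // in hi hlt.
    apply/orP; left; apply/andP; split; lra.
  rewrite ltr0_norm // in hi hlt.
  apply/orP; right; apply/andP; split; lra.
have H2 : cnt (fun i => Wp i || Wm i) <= cnt Wp + cnt Wm :> R by apply: cnt_le2.
have H3 : cnt Wp <= cnt (fun i => `|x i - (b + 2%:R * t)| <= rho / s) :> R.
  apply: cnt_le => i /andP[ha hc]; rewrite er ler_norml; apply/andP; split; lra.
have H4 : cnt Wm <= cnt (fun i => `|x i - - (b + 2%:R * t)| <= rho / s) :> R.
  apply: cnt_le => i /andP[ha hc]; rewrite er ler_norml; apply/andP; split; lra.
have := nCons (b + 2%:R * t); have := nCons (- (b + 2%:R * t)).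
move: Fj1; rewrite /F -/(F j.+3) -/(F j.+1) => Fj1 N1 N2.
right; exists (j.+1%:R * h); first by apply: Kin; rewrite /=; apply: leq_trans (leq_trans (leqnSn _) jN) _; rewrite -addn2 leq_addr.
exists (j.+4%:R * h); first by apply: Kin; rewrite /= !ltnS.
rewrite e1 e4.
change (delta / 4 * nn <= cnt Wp /\ delta / 4 * nn <= cnt Wm).
split; lra.
Qed.
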